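(* Let $\mathcal C=\{a_1C^1,\ldots,a_mC^m\}$ be a complete graph decomposition of a weighted graph $H=H(V,w)$, where $C^j$ has vertex set $V_j$. For each $u\in V$, let $\lambda(\mathcal C_u)$ be the sum of the smallest eigenvalues of the weighted graphs $a_jC^j$ with $u\in V_j$, and let $\lambda(\mathcal C)=\min_u\lambda(\mathcal C_u)$. Then $\lambda(H)\ge\lambda(\mathcal C)$. Moreover, equality holds if and only if there is a nonzero real vector $x=(x_u)_{u\in V}$ such that (1) $x_u=0$ whenever $\lambda(\mathcal C_u)>\lambda(\mathcal C)$; and (2) $x$ is constant on $V_j$ for every $j$ with $a_j<0$, and $\sum_{u\in V_j}x_u=0$ for every $j$ with $a_j>0$ and $|V_j|>1$.
   Context: A weighted graph $H(V,w)$ consists of a finite vertex set $V$ and a real function $w$ on unordered pairs $\{u,v\}$ of vertices (including $u=v$); its adjacency matrix $A(w)$ has $(u,v)$-entry $w(uv)$, and $\lambda(H)$ is its smallest eigenvalue. A decomposition of $H$ is a family of weighted graphs $H^j(V_j,w_j)$ with $V_j\subseteq V$ and $w(uv)=\sum_j w_j(uv)$ for all pairs, where $w_j(uv)=0$ if $u$ or $v$ is not in $V_j$. A complete graph decomposition is a decomposition in which each member is $a_jC^j$ with $a_j$ a nonzero real number and $C^j$ either the simple complete graph on $V_j$ ($|V_j|\ge 2$; weight $a_j$ on every pair of distinct vertices of $V_j$ and $0$ on loops) or the looped complete graph on $V_j$ ($|V_j|\ge1$; weight $a_j$ on every pair of vertices of $V_j$, including each loop $uu$). The complete graphs need not be subgraphs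 of $H$. *)

(* Defs.v *)
From HB Require Import structures.
From mathcomp Require Import all_boot all_order all_algebra.
From Stdlib Require Import ClassicalEpsilon.
Set Implicit Arguments. Unset Strict Implicit. Unset Printing Implicit Defensive.
Import Order.TTheory GRing.Theory Num.Theory.
Local Open Scope ring_scope.

(* Adjacency matrix A(w) of a weighted graph on vertex set 'I_n;
   w u v is the weight of the unordered pair {u,v} (w is required symmetric). *)
Definition adjmx (R : rcfType) (n : nat) (w : 'I_n -> 'I_n -> R) : 'M[R]_n :=
  \matrix_(u, v) w u v.

(* Smallest eigenvalue of a square matrix (chosen by Hilbert's epsilon; it is
   the unique l that is an eigenvalue and below every eigenvalue, which exists
   for real symmetric matrices). *)
Definition is_min_eig (R : rcfType) (n : nat) (A : 'M[R]_n) (l : R) : Prop :=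
  eigenvalue A l /\ (forall a, eigenvalue A a -> l <= a).

Definition lambda_min (R : rcfType) (n : nat) (A : 'M[R]_n) : R :=
  epsilon (inhabits 0) (is_min_eig A).

(* Adjacency matrix of the weighted graph a*C, where C is the complete graph on
   the vertex set S (looped if lp = true, simple otherwise); rows/columns are
   indexed by 'I_#|S| (vertex enum_val i of S). *)
Definition cg_mx (R : rcfType) (n : nat) (S : {set 'I_n}) (lp : bool) (a : R)
  : 'M[R]_#|S| :=
  \matrix_(i, k) (if lp || (i != k) then a else 0).

Definition cg_w (R : rcfType) (n : nat) (S : {set 'I_n}) (lp : bool) (a : R)
  (u v : 'I_n) : R :=
  if (u \in S) && (v \in S) && (lp || (u != v)) then a else 0.

Definition lamCu (R : rcfType) (n m : nat) (Vs : 'I_m -> {set 'I_n})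
  (lp : 'I_m -> bool) (a : 'I_m -> R) (u : 'I_n) : R :=
  \sum_(j < m | u \in Vs j) lambda_min (cg_mx (Vs j) (lp j) (a j)).

Definition lamC (R : rcfType) (n m : nat) (Vs : 'I_m -> {set 'I_n.+1})
  (lp : 'I_m -> bool) (a : 'I_m -> R) : R :=
  \big[Order.min/lamCu Vs lp a ord0]_(u < n.+1) lamCu Vs lp a u.

(* Main.v *)
Require Import Defs.
From HB Require Import structures.
From mathcomp Require Import all_boot all_order all_algebra.
From mathcomp Require Import complex polyrcf.
From mathcomp Require Import ring lra.
From Stdlib Require Import ClassicalEpsilon.
Import Order.TTheory GRing.Theory Num.Theory.
Set Implicit Arguments. Unset Strict Implicit. Unset Printing Implicit Defensive.
Local Open Scope ring_scope.

Lemma rc_real (R : rcfType) (x : R) : (x%:C)%C^* = (x%:C)%C :> R[i].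
Proof. by apply: conj_Creal; rewrite complex_real. Qed.

Lemma sym_real_eig (R : rcfType) n (A : 'M[R]_n.+1) :
  (forall i j, A i j = A j i) -> exists l, eigenvalue A l.
Proof.
move=> Asym.
pose Ac := map_mx (real_complex R) A.
have [z /eigenvalueP [v vA vnz]] := eigenvalue_closed Ac (ltn0Sn n).
pose d := \sum_j v 0 j * (v 0 j)^*.
pose q := \sum_j \sum_i v 0 i * Ac i j * (v 0 j)^*.
have qE : q = z * d.
  rewrite /d mulr_sumr; apply: eq_bigr => j _.
  have := congr1 (fun M : 'M_(1, n.+1) => M 0 j) vA; rewrite !mxE => H; rewrite mulrA -H.
  by rewrite mulr_suml.
have qR : q^* = q.
  rewrite /q rmorph_sum /= exchange_big /=; apply: eq_bigr => j _.
  rewrite rmorph_sum /=; apply: eq_bigr => i _.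
  rewrite !rmorphM /= conjCK !mxE rc_real Asym.
  ring.
have d_ge0 : 0 <= d by apply: sumr_ge0 => j _; apply: mul_conjC_ge0.
have dR : d^* = d by apply: conj_Creal; apply: ger0_real.
have dnz : d != 0.
  apply/eqP => /psumr_eq0P H; apply/negP: vnz; rewrite negbK.
  apply/eqP/rowP => j; rewrite mxE; apply/eqP; rewrite -mul_conjC_eq0.
  by apply/eqP; apply: H => // k _; apply: mul_conjC_ge0.
have zE : z = q / d by rewrite qE mulfK.
have zR : z \is Num.real.
  by apply/CrealP; rewrite zE rmorphM /= fmorphV /= qR dR.
exists (complex.Re z).
rewrite eigenvalue_root_char -(fmorph_root (real_complex R)).
match goal with |- is_true (root _ ?y) => have -> : y = z by exact: RRe_real end.
by rewrite map_char_poly -eigenvalue_root_char; apply/eigenvalueP; exists v.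
Qed.

Lemma seq_min (R : realDomainType) (s : seq R) : s != [::] ->
  exists2 m, m \in s & forall y, y \in s -> m <= y.
Proof.
elim: s => // x [|y s] IH _.
  exists x; first by rewrite mem_seq1.
  by move=> y; rewrite mem_seq1 => /eqP ->.
have [m ms mmin] := IH isT.
case: (leP x m) => [xm|mx].
  exists x; first by rewrite mem_head.
  move=> t; rewrite in_cons => /orP [/eqP -> //|/mmin]; exact: le_trans.
exists m; first by rewrite in_cons ms orbT.
move=> t; rewrite in_cons => /orP [/eqP -> |/mmin //]; exact: ltW.
Qed.

Lemma sym_min_eig (R : rcfType) n (A : 'M[R]_n.+1) :
  (forall i j, A i j = A j i) -> exists l, eigenvalue A l /\ (forall a, eigenvalue A a -> l <= a).
Proof.
move=> /sym_real_eig [l0 Hl0].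
have pnz : char_poly A != 0 by apply: monic_neq0; apply: char_poly_monic.
have memE : forall x, (x \in rootsR (char_poly A)) = eigenvalue A x.
  move=> x; rewrite -(roots_on_rootsR pnz) eigenvalue_root_char.
  by rewrite in_itv.
have [|m ms mmin] := @seq_min _ (rootsR (char_poly A)).
  by apply/eqP => E; move: Hl0; rewrite -memE E.
exists m; split; first by rewrite -memE.
by move=> b; rewrite -memE; apply: mmin.
Qed.

Section Gen.
Variable R : rcfType.

Definition cgc (T : eqType) (lp : bool) (a : R) (u v : T) : R :=
  if lp || (u != v) then a else 0.

Lemma rowsum_cg (T : finType) (P : {set T}) lp a (y : T -> R) u : u \in P ->
  \sum_(v in P) cgc lp a u v * y v =
  a * (\sum_(v in P) y v) - (if lp then 0 else a) * y u.
Proof.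
move=> uP; rewrite /cgc; case: lp => /=.
  by rewrite mul0r subr0 mulr_sumr.
rewrite (bigD1 u) //= eqxx /= mul0r add0r [X in _ = a * X - _](bigD1 u) //=.
rewrite mulrDr addrC addKr mulr_sumr; apply: eq_bigr => v /andP [_ vu].
by rewrite eq_sym vu.
Qed.

Lemma form_cg (T : finType) (P : {set T}) lp a (y : T -> R) :
  \sum_(u in P) \sum_(v in P) y u * cgc lp a u v * y v
  = a * (\sum_(u in P) y u) ^+ 2 - (if lp then 0 else a) * \sum_(u in P) y u ^+ 2.
Proof.
transitivity (\sum_(u in P) y u * (a * (\sum_(v in P) y v) - (if lp then 0 else a) * y u)).
  apply: eq_bigr => u uP.
  under eq_bigr do rewrite -mulrA.
  by rewrite -mulr_sumr rowsum_cg.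
under eq_bigr do rewrite mulrBr.
rewrite sumrB -mulr_suml.
under [X in _ - X = _]eq_bigr do rewrite mulrCA.
rewrite -mulr_sumr.
under [X in _ - _ * X = _]eq_bigr do rewrite -expr2.
ring.
Qed.

Lemma sq_diff (T : finType) (P : {set T}) (y : T -> R) :
  \sum_(u in P) \sum_(v in P) (y u - y v) ^+ 2 =
  2 * (#|P|%:R * \sum_(u in P) y u ^+ 2 - (\sum_(u in P) y u) ^+ 2).
Proof.
have e u v : (y u - y v) ^+ 2 = (y u ^+ 2 + y v ^+ 2) - 2 * (y u * y v) by ring.
under eq_bigr do under eq_bigr do rewrite e.
under eq_bigr do rewrite sumrB big_split /= sumr_const -mulr_sumr -mulr_sumr.
rewrite sumrB big_split /= sumr_const -mulr_sumr -mulr_suml sumrMnl.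
rewrite -mulr_natr -[_ *+ #|P|]mulr_natr; ring.
Qed.


Definition mu (k : nat) (lp : bool) (a : R) : R :=
  if a < 0 then a * k%:R - (if lp then 0 else a)
  else if lp then (if k == 1%N then a else 0) else - a.

Lemma sqsum_eq0 (T : finType) (P : {set T}) (F : T -> R) :
  \sum_(u in P) F u ^+ 2 = 0 -> forall u, u \in P -> F u = 0.
Proof.
move=> /psumr_eq0P H u uP; apply/eqP; rewrite -sqrf_eq0; apply/eqP.
by apply: H => // v _; apply: sqr_ge0.
Qed.

Lemma deficit (T : finType) (P : {set T}) lp a (y : T -> R) :
  a != 0 -> ((if lp then 1 else 2) <= #|P|)%N ->
  let D := \sum_(u in P) \sum_(v in P) y u * cgc lp a u v * y v
           - mu #|P| lp a * \sum_(u in P) y u ^+ 2 in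
  0 <= D /\ (D = 0 -> (a < 0 -> forall u v, u \in P -> v \in P -> y u = y v) /\
                      (0 < a -> (1 < #|P|)%N -> \sum_(u in P) y u = 0)).
Proof.
move=> anz Psz D.
have [aneg|apos] := ltP a 0.
  have DE : D = (- a) / 2 * \sum_(u in P) \sum_(v in P) (y u - y v) ^+ 2.
    by rewrite /D form_cg sq_diff /mu aneg; field.
  rewrite DE; set S2 := \sum_(u in P) _.
  have S2ge : 0 <= S2.
    by apply: sumr_ge0 => u _; apply: sumr_ge0 => v _; apply: sqr_ge0.
  have c : 0 < - a / 2 by lra.
  split; first by apply: mulr_ge0; lra.
  move=> /eqP; rewrite mulf_eq0 gt_eqF //= => /eqP S0.
  split=> [_ u v uP vP|]; last by move=> h; lra.
  move/psumr_eq0P: S0 => S0.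
  have inner : \sum_(v in P) (y u - y v) ^+ 2 = 0.
    by apply: S0 => // i _; apply: sumr_ge0 => j _; apply: sqr_ge0.
  apply/eqP; rewrite -subr_eq0; apply/eqP.
  exact: (@sqsum_eq0 _ P (fun v => y u - y v) inner v vP).
have apos' : 0 < a by rewrite lt_def anz apos.
have an : (a < 0) = false by rewrite ltNge apos.
have [lk|nlk] := boolP (lp && (#|P| == 1%N)).
  case/andP: lk => lpt /cards1P [x Px].
  have D0 : D = 0.
    by rewrite /D form_cg /mu an lpt Px cards1 /= !big_set1; ring.
  by rewrite D0; split => // _; split => //; rewrite Px cards1.
have DE : D = a * (\sum_(u in P) y u) ^+ 2.
  rewrite /D form_cg /mu an.
  by case: (lp) nlk => /=; [move/negPf -> | move=> _]; ring.
rewrite DE; split; first by apply: mulr_ge0 => //; apply: sqr_ge0.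
move=> /eqP; rewrite mulf_eq0 (negPf anz) /= sqrf_eq0 => /eqP s0.
by split.
Qed.


Lemma sum_setT (T : finType) (F : T -> R) : \sum_(i in [set: T]) F i = \sum_i F i.
Proof. by apply: eq_bigl => i; rewrite in_setT. Qed.

Lemma lambda_min_unique n (A : 'M[R]_n) l : is_min_eig A l -> lambda_min A = l.
Proof.
move=> H.
have := epsilon_spec (inhabits 0) (is_min_eig A) (ex_intro _ l H).
rewrite -/(lambda_min A) => -[e1 m1]; case: H => e2 m2.
by apply: le_anti; rewrite m1 // m2.
Qed.

Lemma eig_form n (M : 'M[R]_n) (v : 'rV_n) l : v *m M = l *: v ->
  \sum_i \sum_j v 0 i * M i j * v 0 j = l * \sum_i v 0 i ^+ 2.
Proof.
move=> vM; rewrite exchange_big mulr_sumr; apply: eq_bigr => j _.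
have := congr1 (fun N : 'M_(1, n) => N 0 j) vM; rewrite !mxE => H.
by rewrite -mulr_suml H expr2 mulrA.
Qed.

Lemma sqsum_pos n (v : 'rV[R]_n) : v != 0 -> 0 < \sum_i v 0 i ^+ 2.
Proof.
move=> vnz; rewrite lt_def sumr_ge0 ?andbT; last by move=> i _; exact: sqr_ge0.
apply/eqP => /psumr_eq0P H; apply/negP: vnz; rewrite negbK.
apply/eqP/rowP => i; rewrite mxE; apply/eqP; rewrite -sqrf_eq0; apply/eqP.
by apply: H => // j _; apply: sqr_ge0.
Qed.

Lemma cg_mxE n (S : {set 'I_n}) lp a i j : cg_mx S lp a i j = cgc lp a i j.
Proof. by rewrite mxE. Qed.

Lemma cg_min_eig n (S : {set 'I_n}) lp a :
  a != 0 -> ((if lp then 1 else 2) <= #|S|)%N ->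
  is_min_eig (cg_mx S lp a) (mu #|S| lp a).
Proof.
move=> anz Ssz; split.
  case E: ((a < 0) || (lp && (#|S| == 1%N))).
    apply/eigenvalueP; exists (const_mx 1); last first.
      have k0 : (0 < #|S|)%N by apply: leq_trans Ssz; case: (lp).
      apply/eqP => /rowP /(_ (Ordinal k0)) /eqP.
      by rewrite !mxE oner_eq0.
    apply/rowP => j; rewrite !mxE mulr1.
    under eq_bigr do rewrite mxE mul1r cg_mxE.
    rewrite -sum_setT.
    have -> : \sum_(i in [set: 'I_#|S|]) cgc lp a i j =
              \sum_(i in [set: 'I_#|S|]) cgc lp a j i * (fun _ => 1) i.
      by apply: eq_bigr => i _; rewrite mulr1 /cgc eq_sym.
    rewrite rowsum_cg ?in_setT // sumr_const cardsT card_ord /mu.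
    case/orP: E => [-> | /andP [lpt /eqP k1]]; first by rewrite mulr1.
    by rewrite lpt k1 ltNge; case: (leP 0 a) => //= ha; ring.
  move/negbT: E; rewrite negb_or => /andP [an nlk].
  have k1 : (1 < #|S|)%N.
    by move: nlk Ssz; case: (lp) => //=; rewrite leq_eqVlt eq_sym => /negPf ->.
  pose i0 : 'I_#|S| := Ordinal (ltnW k1).
  pose i1 : 'I_#|S| := Ordinal k1.
  have i01 : (i0 == i1) = false by [].
  apply/eigenvalueP; exists (delta_mx 0 i0 - delta_mx 0 i1); last first.
    apply/eqP => /rowP /(_ i0) /eqP.
    by rewrite !mxE eqxx i01 /= subr0 oner_eq0.
  rewrite mulmxBl -!rowE; apply/rowP => j; rewrite !mxE /mu (negPf an) eqxx /=.
  move: nlk; case: (lp) => /= [/negPf -> | _].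
    by rewrite subrr mul0r.
  have [->|j0] := eqVneq j i0.
    by rewrite eq_sym i01 /=; ring.
  have [Ej|j1] := boolP (j == i1).
    by rewrite eq_sym Ej /=; ring.
  by rewrite eq_sym (negPf j1) /=; ring.
move=> l /eigenvalueP [v vM vnz].
have F := eig_form vM.
have q0 := sqsum_pos vnz.
have Ssz' : ((if lp then 1 else 2) <= #|[set: 'I_#|S|]|)%N by rewrite cardsT card_ord.
have [D0 _] := deficit (fun i => v 0 i) anz Ssz'.
move: D0; rewrite cardsT card_ord !sum_setT.
under eq_bigr do under eq_bigr do rewrite -cg_mxE.
under eq_bigr do rewrite sum_setT.
rewrite F -mulrBl pmulr_lge0 //; lra.
Qed.

Lemma lambda_cg n (S : {set 'I_n}) lp a :
  a != 0 -> ((if lp then 1 else 2) <= #|S|)%N ->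
  lambda_min (cg_mx S lp a) = mu #|S| lp a.
Proof. by move=> anz Ssz; apply: lambda_min_unique; apply: cg_min_eig. Qed.

Lemma restrict_cgw N (S : {set 'I_N}) lp a (y : 'I_N -> R) :
  \sum_u \sum_v y u * cg_w S lp a u v * y v =
  \sum_(u in S) \sum_(v in S) y u * cgc lp a u v * y v.
Proof.
rewrite [RHS]big_mkcond; apply: eq_bigr => u _ /=.
case uS: (u \in S); last first.
  by rewrite big1 // => v _; rewrite /cg_w uS /= mulr0 mul0r.
rewrite [RHS]big_mkcond; apply: eq_bigr => v _ /=.
by rewrite /cg_w /cgc uS; case: (v \in S) => //=; rewrite mulr0 mul0r.
Qed.

Lemma rowsum_cgw N (S : {set 'I_N}) lp a (x : 'I_N -> R) v :
  \sum_u x u * cg_w S lp a u v =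
  if v \in S then \sum_(u in S) cgc lp a v u * x u else 0.
Proof.
case vS: (v \in S); last first.
  by rewrite big1 // => u _; rewrite /cg_w vS andbF /= mulr0.
rewrite [RHS]big_mkcond; apply: eq_bigr => u _ /=.
rewrite /cg_w /cgc vS andbT eq_sym; case: (u \in S) => /=; last by rewrite mulr0.
by rewrite mulrC.
Qed.

Lemma lamCuE N m (Vs : 'I_m -> {set 'I_N}) lp (a : 'I_m -> R)
  (a_nz : forall j, a j != 0)
  (Vs_size : forall j, ((if lp j then 1 else 2) <= #|Vs j|)%N) u :
  lamCu Vs lp a u = \sum_(j < m | u \in Vs j) mu #|Vs j| (lp j) (a j).
Proof. by apply: eq_bigr => j _; rewrite lambda_cg. Qed.

Lemma lamC_le n m (Vs : 'I_m -> {set 'I_n.+1}) lp (a : 'I_m -> R) u :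
  lamC Vs lp a <= lamCu Vs lp a u.
Proof. exact: bigmin_le. Qed.

Lemma decomp n m (w : 'I_n.+1 -> 'I_n.+1 -> R)
  (Vs : 'I_m -> {set 'I_n.+1}) (lp : 'I_m -> bool) (a : 'I_m -> R)
  (a_nz : forall j, a j != 0)
  (Vs_size : forall j, ((if lp j then 1 else 2) <= #|Vs j|)%N)
  (w_dec : forall u v, w u v = \sum_(j < m) cg_w (Vs j) (lp j) (a j) u v)
  (y : 'I_n.+1 -> R) :
  \sum_u \sum_v y u * w u v * y v - lamC Vs lp a * \sum_u y u ^+ 2 =
  \sum_j (\sum_(u in Vs j) \sum_(v in Vs j) y u * cgc (lp j) (a j) u v * y v
          - mu #|Vs j| (lp j) (a j) * \sum_(u in Vs j) y u ^+ 2)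
  + \sum_u y u ^+ 2 * (lamCu Vs lp a u - lamC Vs lp a).
Proof.
have E1 : \sum_u \sum_v y u * w u v * y v =
          \sum_j \sum_(u in Vs j) \sum_(v in Vs j) y u * cgc (lp j) (a j) u v * y v.
  under [X in _ = X]eq_bigr do rewrite -restrict_cgw.
  transitivity (\sum_u \sum_v \sum_j y u * cg_w (Vs j) (lp j) (a j) u v * y v).
    apply: eq_bigr => u _; apply: eq_bigr => v _.
    by rewrite w_dec mulr_sumr mulr_suml.
  rewrite [RHS]exchange_big /=; apply: eq_bigr => u _.
  by rewrite exchange_big.
have E2 : \sum_u y u ^+ 2 * lamCu Vs lp a u =
          \sum_j mu #|Vs j| (lp j) (a j) * \sum_(u in Vs j) y u ^+ 2.
  under eq_bigr do rewrite (lamCuE a_nz Vs_size) mulr_sumr big_mkcond.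
  rewrite exchange_big /=; apply: eq_bigr => j _.
  rewrite mulr_sumr [RHS]big_mkcond; apply: eq_bigr => u _ /=.
  by case: (u \in Vs j) => //; rewrite mulrC.
rewrite E1.
under [X in _ = _ + X]eq_bigr do rewrite mulrBr.
rewrite !sumrB E2 -mulr_suml; ring.
Qed.

Lemma piece_row (T : finType) (S : {set T}) lp a (x : T -> R) v :
  a != 0 -> ((if lp then 1 else 2) <= #|S|)%N ->
  (a < 0 -> forall u v, u \in S -> v \in S -> x u = x v) ->
  (0 < a -> (1 < #|S|)%N -> \sum_(u in S) x u = 0) ->
  v \in S ->
  \sum_(u in S) cgc lp a v u * x u = mu #|S| lp a * x v.
Proof.
move=> anz Ssz hneg hpos vS.
rewrite rowsum_cg // /mu.
have [aneg|apos] := ltP a 0.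
  have -> : \sum_(u in S) x u = \sum_(u in S) x v.
    by apply: eq_bigr => u uS; apply: hneg.
  by rewrite sumr_const -mulr_natr; ring.
have apos' : 0 < a by rewrite lt_def anz apos.
have [k1|k1] := ltnP 1 #|S|.
  rewrite hpos // mulr0 add0r.
  case: (lp) => //=; last by ring.
  by rewrite gtn_eqF //=; ring.
have Sk : #|S| = 1%N.
  by apply/eqP; rewrite eqn_leq k1 /= card_gt0; apply/set0Pn; exists v.
move: Ssz; rewrite Sk; case: (lp) => //= _.
have /cards1P [z Sz] : #|S| == 1%N by rewrite Sk.
move: vS; rewrite Sz in_set1 => /eqP ->.
by rewrite big_set1 mul0r subr0.
Qed.

Lemma eig_lb n m (w : 'I_n.+1 -> 'I_n.+1 -> R)
  (Vs : 'I_m -> {set 'I_n.+1}) (lp : 'I_m -> bool) (a : 'I_m -> R)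
  (a_nz : forall j, a j != 0)
  (Vs_size : forall j, ((if lp j then 1 else 2) <= #|Vs j|)%N)
  (w_dec : forall u v, w u v = \sum_(j < m) cg_w (Vs j) (lp j) (a j) u v)
  l (v : 'rV_n.+1) : v *m adjmx w = l *: v -> v != 0 ->
  (l - lamC Vs lp a) * \sum_u v 0 u ^+ 2 =
  \sum_j (\sum_(u in Vs j) \sum_(v' in Vs j) v 0 u * cgc (lp j) (a j) u v' * v 0 v'
          - mu #|Vs j| (lp j) (a j) * \sum_(u in Vs j) v 0 u ^+ 2)
  + \sum_u v 0 u ^+ 2 * (lamCu Vs lp a u - lamC Vs lp a)
  /\ 0 <= \sum_j (\sum_(u in Vs j) \sum_(v' in Vs j) v 0 u * cgc (lp j) (a j) u v' * v 0 v'
          - mu #|Vs j| (lp j) (a j) * \sum_(u in Vs j) v 0 u ^+ 2)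
  /\ 0 <= \sum_u v 0 u ^+ 2 * (lamCu Vs lp a u - lamC Vs lp a)
  /\ 0 < \sum_u v 0 u ^+ 2.
Proof.
move=> vM vnz.
have F := eig_form vM.
split.
  rewrite -(decomp a_nz Vs_size w_dec) mulrBl -F.
  by under eq_bigr do under eq_bigr do rewrite mxE.
split.
  apply: sumr_ge0 => j _.
  exact: (deficit (fun u => v 0 u) (a_nz j) (Vs_size j)).1.
split; last exact: sqsum_pos.
apply: sumr_ge0 => u _; apply: mulr_ge0; first exact: sqr_ge0.
by rewrite subr_ge0; apply: lamC_le.
Qed.

End Gen.

Theorem mainTheorem2 (R : rcfType) (n m : nat)
  (w : 'I_n.+1 -> 'I_n.+1 -> R)
  (Vs : 'I_m -> {set 'I_n.+1}) (lp : 'I_m -> bool) (a : 'I_m -> R)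
  (w_sym : forall u v, w u v = w v u)
  (a_nz : forall j, a j != 0)
  (Vs_size : forall j, ((if lp j then 1 else 2) <= #|Vs j|)%N)
  (w_dec : forall u v, w u v = \sum_(j < m) cg_w (Vs j) (lp j) (a j) u v) :
  lamC Vs lp a <= lambda_min (adjmx w) /\
  (lambda_min (adjmx w) = lamC Vs lp a <->
   exists x : 'I_n.+1 -> R,
     (exists u, x u != 0) /\
     (forall u, lamC Vs lp a < lamCu Vs lp a u -> x u = 0) /\
     (forall j, a j < 0 -> forall u v, u \in Vs j -> v \in Vs j -> x u = x v) /\
     (forall j, 0 < a j -> (1 < #|Vs j|)%N -> \sum_(u in Vs j) x u = 0)).
Proof.
have Asym : forall i j, adjmx w i j = adjmx w j i by move=> i j; rewrite !mxE.
have lb : forall l, eigenvalue (adjmx w) l -> lamC Vs lp a <= l.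
  move=> l /eigenvalueP [v vM vnz].
  have [E [H1 [H2 H3]]] := eig_lb a_nz Vs_size w_dec vM vnz.
  have : 0 <= (l - lamC Vs lp a) * \sum_u v 0 u ^+ 2 by rewrite E; apply: addr_ge0.
  by rewrite pmulr_lge0 // subr_ge0.
have [l0 [e0 m0]] := sym_min_eig Asym.
have L0 : lambda_min (adjmx w) = l0 by apply: lambda_min_unique.
split; first by rewrite L0; apply: lb.
split.
  rewrite L0 => H; rewrite H in e0.
  move/eigenvalueP: e0 => [v vM vnz].
  have [E [H1 [H2 H3]]] := eig_lb a_nz Vs_size w_dec vM vnz.
  move: E; rewrite subrr mul0r => /esym /eqP; rewrite paddr_eq0 // => /andP [/eqP S1 /eqP S2].
  have ge : forall i, true -> 0 <= v 0 i ^+ 2 * (lamCu Vs lp a i - lamC Vs lp a).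
    by move=> i _; apply: mulr_ge0; [exact: sqr_ge0 | rewrite subr_ge0 lamC_le].
  have geD : forall j, true -> 0 <= \sum_(u in Vs j) \sum_(v' in Vs j) v 0 u * cgc (lp j) (a j) u v' * v 0 v'
          - mu #|Vs j| (lp j) (a j) * \sum_(u in Vs j) v 0 u ^+ 2.
    by move=> j _; exact: (deficit (fun u => v 0 u) (a_nz j) (Vs_size j)).1.
  move/psumr_eq0P: S1 => /(_ geD) S1; move/psumr_eq0P: S2 => /(_ ge) S2.
  exists (fun u => v 0 u); split.
    case: (pickP (fun u => v 0 u != 0)) => [u Hu|H0]; first by exists u.
    exfalso; apply/negP: vnz; rewrite negbK; apply/eqP/rowP => u; rewrite mxE.
    by move: (H0 u) => /negbFE/eqP.
  split.
    move=> u lu; have /eqP := S2 u isT.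
    rewrite mulf_eq0 sqrf_eq0 subr_eq0 (gt_eqF lu) orbF.
    by move/eqP.
  split=> j.
    move=> aj; have := (deficit (fun u => v 0 u) (a_nz j) (Vs_size j)).2 (S1 j isT).
    by case=> /(_ aj).
  move=> aj k1; have := (deficit (fun u => v 0 u) (a_nz j) (Vs_size j)).2 (S1 j isT).
  by case=> _ /(_ aj k1).
move=> [x [[u0 xu0] [hx [hneg hpos]]]].
apply: lambda_min_unique; split; last exact: lb.
apply/eigenvalueP; exists (\row_u x u); last first.
  by apply/eqP => /rowP /(_ u0) /eqP; rewrite !mxE (negPf xu0).
apply/rowP => v; rewrite !mxE.
under eq_bigr do rewrite !mxE w_dec mulr_sumr.
rewrite exchange_big /=.
under eq_bigr do rewrite rowsum_cgw.
transitivity (\sum_j (if v \in Vs j then mu #|Vs j| (lp j) (a j) * x v else 0)).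
  apply: eq_bigr => j _; case vS: (v \in Vs j) => //.
  by apply: piece_row => //; [apply: hneg | apply: hpos].
rewrite -big_mkcond -mulr_suml -(lamCuE a_nz Vs_size).
have [->|xv] := eqVneq (x v) 0; first by rewrite !mulr0.
congr (_ * _); apply: le_anti; rewrite lamC_le andbT leNgt.
by apply/negP => /hx; apply/eqP.
Qed.
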